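(* Let $N\ge1$, $f:\mathbb{N}^N\to\mathbb{N}$, $p$ a prime, $n$ a nonnegative integer and $\mathbf{m}\in\mathbb{N}^N$. Then $\binom{np}{p\mathbf{m}}_f\equiv\binom{n}{\mathbf{m}}_f\pmod p$.
   Context: $\mathbb{N}=\{0,1,2,\dots\}$. For $k\ge0$ and $\mathbf{x}\in\mathbb{N}^N$, $\binom{k}{\mathbf{x}}_f=\sum_{\mathbf{m}_1+\cdots+\mathbf{m}_k=\mathbf{x}} f(\mathbf{m}_1)\cdots f(\mathbf{m}_k)$ over tuples of vectors in $\mathbb{N}^N$. *)

(* Defs.v *)
From mathcomp Require Import all_boot.
Set Implicit Arguments. Unset Strict Implicit. Unset Printing Implicit Defensive.

Notation natvec N := {ffun 'I_N -> nat}.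

(* binom_f(k, x) = sum over k-tuples (m_1,...,m_k) of vectors in N^N with
   m_1 + ... + m_k = x of f(m_1) * ... * f(m_k).
   Every such tuple has all coordinates <= max_j x_j =: M, so we may range
   over tuples of vectors with coordinates in 'I_(M+1) without loss. *)
Definition gbinom (N : nat) (f : natvec N -> nat) (k : nat) (x : natvec N) : nat :=
  let M := \max_(j < N) x j in
  \sum_(t : {ffun 'I_k -> {ffun 'I_N -> 'I_M.+1}}
          | [forall j : 'I_N, \sum_(i < k) (t i j : nat) == x j])
     \prod_(i < k) f [ffun j => (t i j : nat)].

(* Main.v *)
Require Import Defs.
From mathcomp Require Import all_boot all_fingroup all_solvable.
Set Implicit Arguments. Unset Strict Implicit. Unset Printing Implicit Defensive.

Section CFM.
Local Open Scope group_scope.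
Lemma card_fix_mod (T : finType) p (s : T -> T) (S : {set T}) :
  prime p -> (forall x, iter p s x = x) -> (forall x, (s x \in S) = (x \in S)) ->
  #|S| = #|[set x in S | s x == x]| %[mod p].
Proof.
move=> pp hs hS.
have sinj : injective s.
  case: p pp hs {hS} => // p' _ hs x y e.
  by rewrite -[x]hs -[y]hs !iterSr e.
pose pi := perm sinj.
have pG : pgroup p <[pi]>%g.
  rewrite /pgroup -orderE; apply: pnat_dvd (pnat_id pp).
  rewrite order_dvdn; apply/eqP/permP => x.
  by rewrite permX perm1; rewrite (eq_iter (permE sinj)) hs.
have nS : [acts <[pi]>, on S | 'P].
  rewrite cycle_subG; apply/astabsP => x.
  by rewrite /= apermE permE hS.
rewrite (pgroup_fix_mod pG nS) afix_cycle; congr (_ %% p).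
apply: eq_card => x; rewrite !inE; congr (_ && _).
by rewrite sub1set inE /= apermE permE.
Qed.
End CFM.

Lemma sum_congr_mod (I : Type) (r : seq I) (P : pred I) (F G : I -> nat) d :
  (forall i, P i -> F i = G i %[mod d]) ->
  \sum_(i <- r | P i) F i = \sum_(i <- r | P i) G i %[mod d].
Proof.
move=> h; rewrite -modn_summ -[RHS]modn_summ; congr (_ %% d).
by apply: eq_bigr.
Qed.

Lemma sum_as_cards (T : finType) (Q : pred T) (w : T -> nat) K :
  (forall x, w x <= K) ->
  \sum_(x | Q x) w x = \sum_(v < K) #|[set x | Q x && (v < w x)]|.
Proof.
move=> hK.
have ew : forall x, w x = \sum_(v < K) (v < w x).
  move=> x; rewrite -[w x in LHS]card_ord -sum1_card.
  rewrite (big_ord_widen_cond K (fun _ => true) (fun _ => 1) (hK x)) /=.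
  by rewrite big_mkcond /=; apply: eq_bigr => i _; case: (i < w x).
rewrite (eq_bigr _ (fun x _ => ew x)) exchange_big /=.
apply: eq_bigr => v _; rewrite cardsE -sum1_card big_mkcond [RHS]big_mkcond /=.
by apply: eq_bigr => x _; rewrite unfold_in; case: (Q x); case: (v < w x).
Qed.

Lemma sum_fix_mod (T : finType) p (s : T -> T) (P : pred T) (w : T -> nat) :
  prime p -> (forall x, iter p s x = x) -> (forall x, P (s x) = P x) ->
  (forall x, w (s x) = w x) ->
  \sum_(x | P x) w x = \sum_(x | P x && (s x == x)) w x %[mod p].
Proof.
move=> pp hs hP hw.
have hK : forall x, w x <= \max_y w y by move=> x; exact: leq_bigmax.
rewrite !(sum_as_cards _ hK); apply: sum_congr_mod => v _.
rewrite (@card_fix_mod _ p s) //; last by move=> x; rewrite !inE hP hw.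
congr (_ %% p); apply: eq_card => x; rewrite !inE.
by case: (P x); case: (v < w x); case: (s x == x).
Qed.

Lemma big_blocks_nat (R : Type) (idx : R) (op : Monoid.law idx) n p (F : nat -> R) :
  \big[op/idx]_(0 <= i < n * p) F i =
  \big[op/idx]_(0 <= a < n) \big[op/idx]_(0 <= b < p) F (a * p + b).
Proof.
elim: n => [|n IH]; first by rewrite mul0n !big_geq.
rewrite big_nat_recr //= -IH mulSnr.
rewrite (big_cat_nat (leq0n (n * p)) (leq_addr p (n * p))) /=.
congr (op _ _); rewrite -{1}[n * p]add0n big_addn addKn.
by apply: eq_bigr => i _; rewrite addnC.
Qed.

Lemma big_blocks (R : Type) (idx : R) (op : Monoid.law idx) n p (F : nat -> R) :
  \big[op/idx]_(i < n * p) F i =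
  \big[op/idx]_(a < n) \big[op/idx]_(b < p) F (a * p + b).
Proof.
rewrite -[LHS](big_mkord xpredT) big_blocks_nat big_mkord.
by apply: eq_bigr => a _; rewrite big_mkord.
Qed.

Lemma prod_congr_mod (I : Type) (r : seq I) (P : pred I) (F G : I -> nat) d :
  (forall i, P i -> F i = G i %[mod d]) ->
  \prod_(i <- r | P i) F i = \prod_(i <- r | P i) G i %[mod d].
Proof.
move=> h; apply: (big_ind2 (fun a b => a = b %[mod d])) => //.
by move=> a1 a2 b1 b2 e1 e2; rewrite -modnMm e1 e2 modnMm.
Qed.



Definition rotn p i := i %/ p * p + (i %% p).+1 %% p.

Section Rot.
Variables (n p : nat) (hp : 0 < p).

Lemma rotn_div i : rotn p i %/ p = i %/ p.
Proof. by rewrite /rotn divnMDl // (divn_small (ltn_pmod _ hp)) addn0. Qed.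

Lemma rotn_mod i : rotn p i %% p = (i %% p).+1 %% p.
Proof. by rewrite /rotn modnMDl modn_mod. Qed.

Lemma iter_rotn k i : iter k (rotn p) i = i %/ p * p + (i %% p + k) %% p.
Proof.
elim: k => [|k IH]; first by rewrite addn0 modn_mod -divn_eq.
rewrite iterS {1}/rotn IH divnMDl // (divn_small (ltn_pmod _ hp)) addn0.
by rewrite modnMDl modn_mod -addn1 modnDml -addnA addn1.
Qed.

Lemma dv_lt i : i < n * p -> i %/ p < n.
Proof. by rewrite ltn_divLR. Qed.

Lemma ml_lt a : a < n -> a * p < n * p.
Proof. by rewrite ltn_pmul2r. Qed.

Lemma rotn_lt i : i < n * p -> rotn p i < n * p.
Proof.
move=> hi; apply: leq_trans (_ : (i %/ p).+1 * p <= n * p).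
  by rewrite /rotn mulSnr ltn_add2l ltn_pmod.
by rewrite leq_pmul2r // dv_lt.
Qed.

Definition rot (i : 'I_(n * p)) : 'I_(n * p) := Ordinal (rotn_lt (ltn_ord i)).
Definition dv (i : 'I_(n * p)) : 'I_n := Ordinal (dv_lt (ltn_ord i)).
Definition ml (a : 'I_n) : 'I_(n * p) := Ordinal (ml_lt (ltn_ord a)).

Lemma val_iter_rot k i : val (iter k rot i) = iter k (rotn p) i.
Proof. by elim: k => [|k IH] //=; rewrite IH. Qed.

Lemma iter_rot_p i : iter p rot i = i.
Proof.
apply: val_inj; rewrite val_iter_rot iter_rotn.
by rewrite modnDr modn_mod -divn_eq.
Qed.

Lemma rot_inj : injective rot.
Proof.
have hs z : iter p.-1.+1 rot z = z by rewrite prednK // iter_rot_p.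
by move=> x y e; rewrite -[x]hs -[y]hs !iterSr e.
Qed.

Lemma dv_rot i : dv (rot i) = dv i.
Proof. by apply: val_inj; rewrite /= rotn_div. Qed.

Lemma dv_ml a : dv (ml a) = a.
Proof. by apply: val_inj; rewrite /= mulnK. Qed.

Lemma ml_dv_iter (i : 'I_(n * p)) : iter (i %% p) rot (ml (dv i)) = i.
Proof.
apply: val_inj; rewrite val_iter_rot iter_rotn /= mulnK // modnMl add0n modn_mod.
by rewrite -divn_eq.
Qed.

Lemma big_dv (R : Type) (idx : R) (op : Monoid.law idx) (G : 'I_n -> R) :
  \big[op/idx]_(i < n * p) G (dv i) = \big[op/idx]_(a < n) \big[op/idx]_(b < p) G a.
Proof.
pose Gn k := oapp G idx (insub (k %/ p) : option 'I_n).
transitivity (\big[op/idx]_(i < n * p) Gn i).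
  apply: eq_bigr => i _; rewrite /Gn; case: insubP => [a _ e|h] /=.
    by congr G; apply: val_inj; rewrite e.
  by rewrite dv_lt in h.
rewrite big_blocks; apply: eq_bigr => a _; apply: eq_bigr => b _.
rewrite /Gn; case: insubP => [a' _ e|h] /=.
  by congr G; apply: val_inj; rewrite e divnMDl // divn_small // addn0.
by rewrite divnMDl // divn_small // addn0 ltn_ord in h.
Qed.

End Rot.

Section Main.
Variables (N : nat) (f : {ffun 'I_N -> nat} -> nat).

Definition gb B k (x : {ffun 'I_N -> nat}) :=
  \sum_(t : {ffun 'I_k -> {ffun 'I_N -> 'I_B.+1}}
          | [forall j : 'I_N, \sum_(i < k) (t i j : nat) == x j])
     \prod_(i < k) f [ffun j => (t i j : nat)].

Lemma gbinomE k (x : {ffun 'I_N -> nat}) : gbinom f k x = gb (\max_(j < N) x j) k x.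
Proof. by []. Qed.

Lemma gb_widen B1 B2 k (x : {ffun 'I_N -> nat}) : (forall j, x j <= B1) -> B1 <= B2 -> gb B1 k x = gb B2 k x.
Proof.
move=> hx hB.
have hB' : B1.+1 <= B2.+1 by [].
pose h (t : {ffun 'I_k -> {ffun 'I_N -> 'I_B1.+1}}) : {ffun 'I_k -> {ffun 'I_N -> 'I_B2.+1}} :=
  [ffun i => [ffun j => widen_ord hB' (t i j)]].
pose h' (t : {ffun 'I_k -> {ffun 'I_N -> 'I_B2.+1}}) : {ffun 'I_k -> {ffun 'I_N -> 'I_B1.+1}} :=
  [ffun i => [ffun j => inord (t i j)]].
rewrite /gb [RHS](reindex_onto h h').
  apply: eq_big => [t|t _].
    have -> : h' (h t) = t.
      by apply/ffunP => i; apply/ffunP => j; apply: val_inj; rewrite !ffunE /= inordK.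
    rewrite eqxx andbT; apply: eq_forallb => j.
    by under [in RHS]eq_bigr do rewrite !ffunE.
  apply: eq_bigr => i _; congr f; apply/ffunP => j; by rewrite !ffunE.
move=> t /forallP ht; apply/ffunP => i; apply/ffunP => j; apply: val_inj.
rewrite !ffunE /= inordK // ltnS.
apply: leq_trans (hx j); move/eqP: (ht j) => <-.
by rewrite (bigD1 i) //= leq_addr.
Qed.

Lemma gb_main B p n (m : {ffun 'I_N -> nat}) : prime p ->
  gb B (n * p) [ffun j => p * m j] = gb B n m %[mod p].
Proof.
move=> pp; have hp := prime_gt0 pp.
pose V := {ffun 'I_N -> 'I_B.+1}.
pose sig (t : {ffun 'I_(n * p) -> V}) : {ffun 'I_(n * p) -> V} := [ffun i => t (rot hp i)].
have iter_sig k t : iter k sig t = [ffun i => t (iter k (rot hp) i)].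
  elim: k => [|k IH] /=; first by apply/ffunP => i; rewrite ffunE.
  by apply/ffunP => i; rewrite IH /sig !ffunE -iterS iterSr.
have hs t : iter p sig t = t by rewrite iter_sig; apply/ffunP => i; rewrite ffunE iter_rot_p.
have hP t : [forall j, \sum_(i < n * p) (sig t i j : nat) == [ffun j => p * m j] j] =
            [forall j, \sum_(i < n * p) (t i j : nat) == [ffun j => p * m j] j].
  apply: eq_forallb => j; congr (_ == _).
  rewrite [RHS](reindex_inj (rot_inj (hp:=hp))); apply: eq_bigr => i _; by rewrite ffunE.
have hw t : \prod_(i < n * p) f [ffun j => (sig t i j : nat)] =
            \prod_(i < n * p) f [ffun j => (t i j : nat)].
  rewrite [RHS](reindex_inj (rot_inj (hp:=hp))); apply: eq_bigr => i _; by rewrite ffunE.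
rewrite /gb (sum_fix_mod pp hs hP hw).
pose h (s : {ffun 'I_n -> V}) : {ffun 'I_(n * p) -> V} := [ffun i => s (dv hp i)].
pose h' (t : {ffun 'I_(n * p) -> V}) : {ffun 'I_n -> V} := [ffun a => t (ml hp a)].
rewrite (reindex_onto h h') /=; last first.
  move=> t /andP[_ /eqP ft]; apply/ffunP => i; rewrite !ffunE.
  have fr z : t (rot hp z) = t z by rewrite -{2}ft ffunE.
  have fk k y : t (iter k (rot hp) y) = t y.
    by elim: k => //= k IH; rewrite fr IH.
  by rewrite -[in RHS](ml_dv_iter hp i) fk.
have hh' s : h' (h s) = s by apply/ffunP => a; rewrite !ffunE dv_ml.
have sh s : sig (h s) = h s by apply/ffunP => i; rewrite !ffunE dv_rot.
rewrite (eq_bigl (fun s : {ffun 'I_n -> V} => [forall j, \sum_(a < n) (s a j : nat) == m j])); last first.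
  move=> s; rewrite hh' sh !eqxx !andbT; apply: eq_forallb => j.
  rewrite ffunE (eq_bigr (fun i => (s (dv hp i) j : nat))); last by move=> i _; rewrite ffunE.
  rewrite (@big_dv n p hp _ _ _ (fun a => (s a j : nat))).
  under eq_bigr do rewrite big_const_ord iter_addn_0.
  by rewrite -big_distrl /= mulnC eqn_pmul2l.
apply: sum_congr_mod => s _.
rewrite (eq_bigr (fun i => f [ffun j => (s (dv hp i) j : nat)])); last first.
  by move=> i _; congr f; apply/ffunP => j; rewrite !ffunE.
have -> : \prod_(i < n * p) f [ffun j => (s (dv hp i) j : nat)] =
          \prod_(a < n) \prod_(b < p) f [ffun j => (s a j : nat)].
  exact: (@big_dv n p hp _ _ _ (fun a => f [ffun j => (s a j : nat)])).
rewrite (eq_bigr (fun a => f [ffun j => (s a j : nat)] ^ p)); last first.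
  by move=> a _; rewrite prod_nat_const card_ord.
by apply: prod_congr_mod => a _; apply: fermat_little.
Qed.

End Main.

Theorem theorem8 (N : nat) (hN : 0 < N) (f : {ffun 'I_N -> nat} -> nat)
    (p n : nat) (m : {ffun 'I_N -> nat}) :
  prime p ->
  gbinom f (n * p) [ffun j => p * m j] = gbinom f n m %[mod p].
Proof.
move=> pp; have hp := prime_gt0 pp.
rewrite !gbinomE.
rewrite (@gb_widen N f (\max_(j < N) m j) (\max_(j < N) [ffun j => p * m j] j) n m).
- exact: gb_main.
- by move=> j; exact: leq_bigmax.
apply/bigmax_leqP => j _.
have := @leq_bigmax _ (fun i : 'I_N => [ffun j => p * m j] i) j.
by rewrite ffunE; apply: leq_trans; rewrite leq_pmull.
Qed.
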